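(* With the setting of the conformal-gauge Dirac bracket (constraints $\vec x\cdot\vec p=0$, $|\vec x|^2=|\vec p|^2$, $\vec x\wedge\vec p\ne0$, Dirac bracket $\{\cdot,\cdot\}_D$, and $\mathcal N=|\vec J|$, $\vec J=\vec x\wedge\vec p$, $\vec K=|\vec x|\vec x$, $\vec L=|\vec p|\vec p$), define on the constraint surface the complex functions $$w_0=K_-+iL_-=(|\vec x|p_2+|\vec p|x_1)-i(|\vec p|x_2-|\vec x|p_1),\qquad w_1=-(K_++iL_+),$$ where $K_\pm=K_1\pm iK_2$, $L_\pm=L_1\pm iL_2$. Then $|w_0|=\mathcal N+J_3$, $|w_1|=\mathcal N-J_3$, and $$\{w_0,w_1\}_D=0,\quad \{w_0,\bar w_1\}_D=0,\quad \{w_0,\bar w_0\}_D=-4i(\mathcal N+J_3),\quad \{w_1,\bar w_1\}_D=-4i(\mathcal N-J_3).$$ Consequently, if $(z_0,z_1)$ are (locally defined) square roots with $z_A^2=w_A$, then $\frac12(|z_0|^2+|z_1|^2)=\mathcal N$, $\frac12(|z_0|^2-|z_1|^2)=J_3$, and these brackets are those of canonical spinor variables with $\{z_A,\bar z_B\}=-i\delta_{AB}$, $\{z_A,z_B\}=0$. *)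

(* Defs.v *)
(* classical reals. Phase space R^6 with coordinates
   v 0, v 1, v 2 = x1, x2, x3 and v 3, v 4, v 5 = p1, p2, p3. *)
From Stdlib Require Import Reals ClassicalEpsilon.
Open Scope R_scope.

Definition V := nat -> R.

Definition upd (v : V) (i : nat) (t : R) : V :=
  fun j => if Nat.eqb j i then t else v j.

(* i-th partial derivative at v (the derivative of the coordinate-line
   restriction, chosen by epsilon; it is the genuine one whenever it exists) *)
Definition pd (f : V -> R) (i : nat) (v : V) : R :=
  epsilon (inhabits 0)
    (fun l => derivable_pt_lim (fun t => f (upd v i t)) (v i) l).

Definition has_partials (f : V -> R) (v : V) : Prop :=
  forall i, (i < 6)%nat ->
    exists l, derivable_pt_lim (fun t => f (upd v i t)) (v i) l.

Definition pb (f g : V -> R) (v : V) : R :=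
    (pd f 0 v * pd g 3 v - pd f 3 v * pd g 0 v)
  + (pd f 1 v * pd g 4 v - pd f 4 v * pd g 1 v)
  + (pd f 2 v * pd g 5 v - pd f 5 v * pd g 2 v).

Definition x1 (v : V) := v 0%nat.
Definition x2 (v : V) := v 1%nat.
Definition x3 (v : V) := v 2%nat.
Definition p1 (v : V) := v 3%nat.
Definition p2 (v : V) := v 4%nat.
Definition p3 (v : V) := v 5%nat.

Definition normx (v : V) := sqrt (x1 v ^ 2 + x2 v ^ 2 + x3 v ^ 2).
Definition normp (v : V) := sqrt (p1 v ^ 2 + p2 v ^ 2 + p3 v ^ 2).

Definition phi1 (v : V) : R := x1 v * p1 v + x2 v * p2 v + x3 v * p3 v.
Definition phi2 (v : V) : R :=
  (x1 v ^ 2 + x2 v ^ 2 + x3 v ^ 2) - (p1 v ^ 2 + p2 v ^ 2 + p3 v ^ 2).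

(* Dirac bracket for the two second-class constraints:
   {f,g}_D = {f,g} - sum_{a,b} {f,phi_a} (C^-1)_{ab} {phi_b,g},
   C_{ab} = {phi_a,phi_b} = [[0,c],[-c,0]], c = {phi1,phi2},
   C^-1 = (1/c) [[0,-1],[1,0]]. *)
Definition dirac (f g : V -> R) (v : V) : R :=
  pb f g v
  - (pb f phi2 v * pb phi1 g v - pb f phi1 v * pb phi2 g v) / pb phi1 phi2 v.

Definition J1 (v : V) := x2 v * p3 v - x3 v * p2 v.
Definition J2 (v : V) := x3 v * p1 v - x1 v * p3 v.
Definition J3 (v : V) := x1 v * p2 v - x2 v * p1 v.
Definition NN (v : V) := sqrt (J1 v ^ 2 + J2 v ^ 2 + J3 v ^ 2).

Definition on_surface (v : V) : Prop :=
  phi1 v = 0 /\ phi2 v = 0 /\ ~ (J1 v = 0 /\ J2 v = 0 /\ J3 v = 0).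

Definition Cx := (R * R)%type.
Definition cadd (a b : Cx) : Cx := (fst a + fst b, snd a + snd b).
Definition cmul (a b : Cx) : Cx :=
  (fst a * fst b - snd a * snd b, fst a * snd b + snd a * fst b).
Definition copp (a : Cx) : Cx := (- fst a, - snd a).
Definition ci : Cx := (0, 1).
Definition cnorm (a : Cx) : R := sqrt (fst a ^ 2 + snd a ^ 2).

Definition cconj (F : V -> Cx) : V -> Cx := fun u => (fst (F u), - snd (F u)).

(* Dirac bracket extended C-bilinearly to complex-valued functions *)
Definition cdirac (F G : V -> Cx) (v : V) : Cx :=
  let u1 := fun u => fst (F u) in let v1 := fun u => snd (F u) in
  let u2 := fun u => fst (G u) in let v2 := fun u => snd (G u) in
  (dirac u1 u2 v - dirac v1 v2 v, dirac u1 v2 v + dirac v1 u2 v).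

Definition cdiff (F : V -> Cx) (v : V) : Prop :=
  has_partials (fun u => fst (F u)) v /\ has_partials (fun u => snd (F u)) v.

Definition K1 (v : V) := normx v * x1 v.
Definition K2 (v : V) := normx v * x2 v.
Definition L1 (v : V) := normp v * p1 v.
Definition L2 (v : V) := normp v * p2 v.
Definition Kplus (v : V) : Cx := (K1 v, K2 v).
Definition Kminus (v : V) : Cx := (K1 v, - K2 v).
Definition Lplus (v : V) : Cx := (L1 v, L2 v).
Definition Lminus (v : V) : Cx := (L1 v, - L2 v).

Definition w0 (v : V) : Cx := cadd (Kminus v) (cmul ci (Lminus v)).
Definition w1 (v : V) : Cx := copp (cadd (Kplus v) (cmul ci (Lplus v))).

Definition local_sqrt (z w : V -> Cx) (v : V) : Prop :=
  exists d, 0 < d /\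
    forall u : V, (forall j, (j < 6)%nat -> Rabs (u j - v j) < d) ->
      cmul (z u) (z u) = w u.

(* Main.v *)
Require Import Defs.
From Stdlib Require Import Reals Lra Lia FunctionalExtensionality ClassicalEpsilon.
Open Scope R_scope.

Lemma upd_same v i : upd v i (v i) = v.
Proof. apply functional_extensionality; intro j; unfold upd;
  destruct (Nat.eqb_spec j i); subst; auto. Qed.

Lemma pd_eq f i v l : derivable_pt_lim (fun t => f (upd v i t)) (v i) l -> pd f i v = l.
Proof. intro H. unfold pd. apply uniqueness_limite with (f := fun t => f (upd v i t)) (x := v i); auto.
  apply epsilon_spec. exists l; exact H. Qed.

Definition HG (f : V -> R) (v : V) (g : nat -> R) :=
  forall i, (i < 6)%nat -> derivable_pt_lim (fun t => f (upd v i t)) (v i) (g i).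

Lemma HG_pd f v g i : HG f v g -> (i < 6)%nat -> pd f i v = g i.
Proof. intros H Hi; apply pd_eq, H, Hi. Qed.

Lemma HG_fext f f' v g : (forall u, f u = f' u) -> HG f' v g -> HG f v g.
Proof. intros E H i Hi. replace (fun t => f (upd v i t)) with (fun t => f' (upd v i t)).
  apply H, Hi. apply functional_extensionality; intro; rewrite E; auto. Qed.

Lemma HG_gext f v g g' : (forall i, (i < 6)%nat -> g i = g' i) -> HG f v g -> HG f v g'.
Proof. intros E H i Hi. rewrite <- E by auto. apply H, Hi. Qed.

Lemma HG_coord k v : HG (fun u => u k) v (fun i => if Nat.eqb k i then 1 else 0).
Proof. intros i _. unfold upd. destruct (Nat.eqb k i) eqn:E.
  - apply Nat.eqb_eq in E; subst. apply derivable_pt_lim_id.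
  - apply derivable_pt_lim_const. Qed.

Lemma HG_const c v : HG (fun _ => c) v (fun _ => 0).
Proof. intros i _. apply derivable_pt_lim_const. Qed.

Lemma HG_plus f1 f2 v g1 g2 : HG f1 v g1 -> HG f2 v g2 ->
  HG (fun u => f1 u + f2 u) v (fun i => g1 i + g2 i).
Proof. intros H1 H2 i Hi. apply (derivable_pt_lim_plus (fun t => f1 (upd v i t)) (fun t => f2 (upd v i t))); auto. Qed.

Lemma HG_opp f v g : HG f v g -> HG (fun u => - f u) v (fun i => - g i).
Proof. intros H i Hi. apply (derivable_pt_lim_opp (fun t => f (upd v i t))); auto. Qed.

Lemma HG_minus f1 f2 v g1 g2 : HG f1 v g1 -> HG f2 v g2 ->
  HG (fun u => f1 u - f2 u) v (fun i => g1 i - g2 i).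
Proof. intros H1 H2 i Hi. apply (derivable_pt_lim_minus (fun t => f1 (upd v i t)) (fun t => f2 (upd v i t))); auto. Qed.

Lemma HG_mult f1 f2 v g1 g2 : HG f1 v g1 -> HG f2 v g2 ->
  HG (fun u => f1 u * f2 u) v (fun i => g1 i * f2 v + f1 v * g2 i).
Proof. intros H1 H2 i Hi.
  pose proof (derivable_pt_lim_mult (fun t => f1 (upd v i t)) (fun t => f2 (upd v i t)) _ _ _ (H1 i Hi) (H2 i Hi)) as H.
  simpl in H. rewrite upd_same in H. exact H. Qed.

Lemma HG_sqrt f v g : 0 < f v -> HG f v g ->
  HG (fun u => sqrt (f u)) v (fun i => / (2 * sqrt (f v)) * g i).
Proof. intros Hp H i Hi.
  assert (Hs : derivable_pt_lim sqrt ((fun t => f (upd v i t)) (v i)) (/ (2 * sqrt (f v)))).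
  { simpl; rewrite upd_same; apply derivable_pt_lim_sqrt, Hp. }
  pose proof (derivable_pt_lim_comp (fun t => f (upd v i t)) sqrt _ _ _ (H i Hi) Hs) as C.
  exact C. Qed.

Lemma HG_pow2 f v g : HG f v g -> HG (fun u => f u ^ 2) v (fun i => 2 * f v * g i).
Proof. intro H. eapply HG_fext. 2: eapply HG_gext. 3: apply (HG_mult _ _ _ _ _ H H).
  intro; simpl; ring. intros; simpl; ring. Qed.


Definition Sx v := x1 v ^ 2 + x2 v ^ 2 + x3 v ^ 2.
Definition Sp v := p1 v ^ 2 + p2 v ^ 2 + p3 v ^ 2.

Definition gnx v (i : nat) : R := match i with 0 => x1 v / normx v | 1 => x2 v / normx v
  | 2 => x3 v / normx v | _ => 0 end.
Definition gnp v (i : nat) : R := match i with 3 => p1 v / normp v | 4 => p2 v / normp v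
  | 5 => p3 v / normp v | _ => 0 end.

Ltac cases6 i := destruct i as [|[|[|[|[|[|i]]]]]]; [ | | | | | | exfalso; lia].

Lemma HG_normx v : 0 < Sx v -> HG normx v (gnx v).
Proof. intro H. unfold normx.
 eapply HG_gext. 2:{ apply HG_sqrt. exact H. apply HG_plus; [apply HG_plus|]; apply HG_pow2; apply (HG_coord _). }
 assert (sqrt (Sx v) <> 0) by (apply Rgt_not_eq, sqrt_lt_R0, H).
 unfold Sx in *.
 intros i Hi; cases6 i; cbn [Nat.eqb gnx]; unfold normx, x1, x2, x3 in *; field; auto. Qed.

Lemma HG_normp v : 0 < Sp v -> HG normp v (gnp v).
Proof. intro H. unfold normp.
 eapply HG_gext. 2:{ apply HG_sqrt. exact H. apply HG_plus; [apply HG_plus|]; apply HG_pow2; apply (HG_coord _). }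
 assert (sqrt (Sp v) <> 0) by (apply Rgt_not_eq, sqrt_lt_R0, H).
 unfold Sp in *.
 intros i Hi; cases6 i; cbn [Nat.eqb gnp]; unfold normp, p1, p2, p3 in *; field; auto. Qed.

Definition gR0 v (i : nat) : R := let nx := normx v in let np := normp v in
  match i with 0 => x1 v * x1 v / nx + nx | 1 => x2 v * x1 v / nx | 2 => x3 v * x1 v / nx
  | 3 => p1 v * p2 v / np | 4 => p2 v * p2 v / np + np | 5 => p3 v * p2 v / np | _ => 0 end.
Definition gI0 v (i : nat) : R := let nx := normx v in let np := normp v in
  match i with 0 => - (x1 v * x2 v / nx) | 1 => - (x2 v * x2 v / nx + nx) | 2 => - (x3 v * x2 v / nx)
  | 3 => p1 v * p1 v / np + np | 4 => p2 v * p1 v / np | 5 => p3 v * p1 v / np | _ => 0 end.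
Definition gR1 v (i : nat) : R := let nx := normx v in let np := normp v in
  match i with 0 => - (x1 v * x1 v / nx + nx) | 1 => - (x2 v * x1 v / nx) | 2 => - (x3 v * x1 v / nx)
  | 3 => p1 v * p2 v / np | 4 => p2 v * p2 v / np + np | 5 => p3 v * p2 v / np | _ => 0 end.
Definition gI1 v (i : nat) : R := let nx := normx v in let np := normp v in
  match i with 0 => - (x1 v * x2 v / nx) | 1 => - (x2 v * x2 v / nx + nx) | 2 => - (x3 v * x2 v / nx)
  | 3 => - (p1 v * p1 v / np + np) | 4 => - (p2 v * p1 v / np) | 5 => - (p3 v * p1 v / np) | _ => 0 end.
Definition gphi1 v (i : nat) : R :=
  match i with 0 => p1 v | 1 => p2 v | 2 => p3 v | 3 => x1 v | 4 => x2 v | 5 => x3 v | _ => 0 end.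
Definition gphi2 v (i : nat) : R :=
  match i with 0 => 2 * x1 v | 1 => 2 * x2 v | 2 => 2 * x3 v | 3 => - (2 * p1 v) | 4 => - (2 * p2 v)
  | 5 => - (2 * p3 v) | _ => 0 end.

Ltac hgsolve := repeat first [ apply HG_pow2 | apply HG_plus | apply HG_minus | apply HG_opp | apply HG_mult
  | apply HG_normx; assumption | apply HG_normp; assumption | apply (HG_coord _) | apply HG_pow2 ].


Lemma HG_R0 v (Hx : 0 < Sx v) (Hp : 0 < Sp v) : HG (fun u => fst (w0 u)) v (gR0 v).
Proof. assert (nx0 : normx v <> 0) by (apply Rgt_not_eq, sqrt_lt_R0, Hx).
 assert (np0 : normp v <> 0) by (apply Rgt_not_eq, sqrt_lt_R0, Hp).
 eapply HG_fext with (f' := fun u => normx u * x1 u + normp u * p2 u).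
 { intro u; unfold w0, cadd, cmul, Kminus, Lminus, ci, K1, K2, L1, L2; simpl; ring. }
 eapply HG_gext. 2: hgsolve.
 intros i Hi; cases6 i; cbn [Nat.eqb gnx gnp gR0]; unfold x1,x2,x3,p1,p2,p3 in *; field; auto. Qed.
Lemma HG_I0 v (Hx : 0 < Sx v) (Hp : 0 < Sp v) : HG (fun u => snd (w0 u)) v (gI0 v).
Proof. assert (nx0 : normx v <> 0) by (apply Rgt_not_eq, sqrt_lt_R0, Hx).
 assert (np0 : normp v <> 0) by (apply Rgt_not_eq, sqrt_lt_R0, Hp).
 eapply HG_fext with (f' := fun u => normp u * p1 u - normx u * x2 u).
 { intro u; unfold w0, cadd, cmul, Kminus, Lminus, ci, K1, K2, L1, L2; simpl; ring. }
 eapply HG_gext. 2: hgsolve.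
 intros i Hi; cases6 i; cbn [Nat.eqb gnx gnp gI0]; unfold x1,x2,x3,p1,p2,p3 in *; field; auto. Qed.
Lemma HG_R1 v (Hx : 0 < Sx v) (Hp : 0 < Sp v) : HG (fun u => fst (w1 u)) v (gR1 v).
Proof. assert (nx0 : normx v <> 0) by (apply Rgt_not_eq, sqrt_lt_R0, Hx).
 assert (np0 : normp v <> 0) by (apply Rgt_not_eq, sqrt_lt_R0, Hp).
 eapply HG_fext with (f' := fun u => normp u * p2 u - normx u * x1 u).
 { intro u; unfold w1, copp, cadd, cmul, Kplus, Lplus, ci, K1, K2, L1, L2; simpl; ring. }
 eapply HG_gext. 2: hgsolve.
 intros i Hi; cases6 i; cbn [Nat.eqb gnx gnp gR1]; unfold x1,x2,x3,p1,p2,p3 in *; field; auto. Qed.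
Lemma HG_I1 v (Hx : 0 < Sx v) (Hp : 0 < Sp v) : HG (fun u => snd (w1 u)) v (gI1 v).
Proof. assert (nx0 : normx v <> 0) by (apply Rgt_not_eq, sqrt_lt_R0, Hx).
 assert (np0 : normp v <> 0) by (apply Rgt_not_eq, sqrt_lt_R0, Hp).
 eapply HG_fext with (f' := fun u => - (normx u * x2 u + normp u * p1 u)).
 { intro u; unfold w1, copp, cadd, cmul, Kplus, Lplus, ci, K1, K2, L1, L2; simpl; ring. }
 eapply HG_gext. 2: hgsolve.
 intros i Hi; cases6 i; cbn [Nat.eqb gnx gnp gI1]; unfold x1,x2,x3,p1,p2,p3 in *; field; auto. Qed.

Lemma HG_phi1 v : HG phi1 v (gphi1 v).
Proof. unfold phi1. eapply HG_gext. 2: hgsolve.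
 intros i Hi; cases6 i; cbn [Nat.eqb gphi1]; unfold x1,x2,x3,p1,p2,p3 in *; ring. Qed.
Lemma HG_phi2 v : HG phi2 v (gphi2 v).
Proof. unfold phi2. eapply HG_gext. 2: hgsolve.
 intros i Hi; cases6 i; cbn [Nat.eqb gphi2]; unfold x1,x2,x3,p1,p2,p3 in *; ring. Qed.


Definition pbg (a b : nat -> R) : R :=
  (a 0%nat * b 3%nat - a 3%nat * b 0%nat) + (a 1%nat * b 4%nat - a 4%nat * b 1%nat)
  + (a 2%nat * b 5%nat - a 5%nat * b 2%nat).

Definition Dg v a b := pbg a b - (pbg a (gphi2 v) * pbg (gphi1 v) b - pbg a (gphi1 v) * pbg (gphi2 v) b)
   / pbg (gphi1 v) (gphi2 v).

Lemma pb_HG f g v a b : HG f v a -> HG g v b -> pb f g v = pbg a b.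
Proof. intros Ha Hb. unfold pb, pbg.
  repeat rewrite (HG_pd f v a) by (auto; lia).
  repeat rewrite (HG_pd g v b) by (auto; lia). reflexivity. Qed.

Lemma dirac_HG f g v a b : HG f v a -> HG g v b -> dirac f g v = Dg v a b.
Proof. intros Ha Hb. unfold dirac, Dg.
  rewrite !(pb_HG _ _ _ _ _ Ha Hb), (pb_HG _ _ _ _ _ Ha (HG_phi2 v)),
   (pb_HG _ _ _ _ _ (HG_phi1 v) Hb), (pb_HG _ _ _ _ _ Ha (HG_phi1 v)),
   (pb_HG _ _ _ _ _ (HG_phi2 v) Hb), (pb_HG _ _ _ _ _ (HG_phi1 v) (HG_phi2 v)). reflexivity. Qed.

Lemma cdirac_HG F G v a1 b1 a2 b2 :
  HG (fun u => fst (F u)) v a1 -> HG (fun u => snd (F u)) v b1 ->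
  HG (fun u => fst (G u)) v a2 -> HG (fun u => snd (G u)) v b2 ->
  cdirac F G v = (Dg v a1 a2 - Dg v b1 b2, Dg v a1 b2 + Dg v b1 a2).
Proof. intros. unfold cdirac. cbv zeta.
  erewrite (dirac_HG _ _ v a1 a2), (dirac_HG _ _ v b1 b2), (dirac_HG _ _ v a1 b2), (dirac_HG _ _ v b1 a2); auto. Qed.

Lemma HG_conj_fst G v a : HG (fun u => fst (G u)) v a -> HG (fun u => fst (cconj G u)) v a.
Proof. auto. Qed.
Lemma HG_conj_snd G v a : HG (fun u => snd (G u)) v a -> HG (fun u => snd (cconj G u)) v (fun i => - a i).
Proof. intro H. apply HG_opp, H. Qed.

Lemma surf_facts v : on_surface v ->
  0 < Sx v /\ Sp v = Sx v /\ phi1 v = 0 /\ normp v = normx v /\ normx v * normx v = Sx v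
  /\ NN v = Sx v.
Proof. intros [H1 [H2 H3]]. unfold phi1, phi2 in *.
  assert (Sp v = Sx v) by (unfold Sp, Sx; lra).
  assert (0 < Sx v).
  { unfold Sx. destruct (Rle_lt_or_eq_dec 0 (x1 v ^ 2 + x2 v ^ 2 + x3 v ^ 2)) as [h|h]; [nra|auto|].
    exfalso; apply H3. assert (x1 v = 0) by nra. assert (x2 v = 0) by nra. assert (x3 v = 0) by nra.
    unfold J1, J2, J3. rewrite H0, H4, H5. repeat split; ring. }
  repeat split; auto.
  - unfold normp, normx. unfold Sp, Sx in H. rewrite H; auto.
  - unfold normx. apply sqrt_sqrt. unfold Sx in *; lra.
  - unfold NN. replace (J1 v ^ 2 + J2 v ^ 2 + J3 v ^ 2) with (Sx v ^ 2).
    apply sqrt_pow2; lra.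
    unfold J1, J2, J3. unfold Sx, Sp in *.
    assert (E : (x1 v ^ 2 + x2 v ^ 2 + x3 v ^ 2) ^ 2 = (x1 v ^ 2 + x2 v ^ 2 + x3 v ^ 2) * (p1 v ^ 2 + p2 v ^ 2 + p3 v ^ 2)) by (rewrite H; ring).
    rewrite E. assert (E2 : (x1 v * p1 v + x2 v * p2 v + x3 v * p3 v)^2 = 0) by (rewrite H1; ring).
    rewrite <- (Rminus_0_r (_ * _)), <- E2 at 1. ring. Qed.


Lemma ideal3 (L R g1 g2 g3 q1 q2 q3 : R) : g1 = 0 -> g2 = 0 -> g3 = 0 ->
  L - R = q1 * g1 + q2 * g2 + q3 * g3 -> L = R.
Proof. intros -> -> -> H. lra. Qed.

Ltac alg v Hx Hsp H1 Hn Hnn HN Hp :=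
  unfold Dg, pbg, gR0, gI0, gR1, gI1, gphi1, gphi2; rewrite ?HN, Hn; unfold phi1, Sx, Sp, J3 in *;
  let H := fresh in assert (H : normx v <> 0) by (let h := fresh in intro h; rewrite h in Hnn; lra);
  set (r := normx v) in *; set (a := x1 v) in *; set (b := x2 v) in *; set (c := x3 v) in *;
  set (d := p1 v) in *; set (e := p2 v) in *; set (f := p3 v) in *;
  assert (G1 : r ^ 2 - (a ^ 2 + b ^ 2 + c ^ 2) = 0) by (rewrite <- Hnn; ring);
  assert (G2 : d ^ 2 + e ^ 2 + f ^ 2 - (a ^ 2 + b ^ 2 + c ^ 2) = 0) by lra;
  assert (G3 : a * d + b * e + c * f = 0) by lra;
  f_equal; field_simplify_eq; [ | split; [auto | nra] | | split; [auto | nra]].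

Lemma w01 v : on_surface v -> cdirac w0 w1 v = (0, 0).
Proof. intro Hs. destruct (surf_facts v Hs) as (Hx & Hsp & H1 & Hn & Hnn & HN).
  assert (Hp : 0 < Sp v) by lra.
  rewrite (cdirac_HG _ _ v _ _ _ _ (HG_R0 v Hx Hp) (HG_I0 v Hx Hp) (HG_R1 v Hx Hp) (HG_I1 v Hx Hp)).
  alg v Hx Hsp H1 Hn Hnn HN Hp.
  - apply (ideal3 _ _ _ _ _ ((-8)*a*b*d^2 + (8)*a^2*d*e + (-8)*b^2*d*e + (8)*a*b*e^2 + (-8)*b*c*d*f + (8)*a*c*e*f) ((8)*a*b*d^2 + (-8)*a^2*d*e + (8)*b^2*d*e + (-8)*a*b*e^2 + (8)*b*c*d*f + (-8)*a*c*e*f) ((-8)*b*d^3 + (8)*a*d^2*e + (-8)*b*d*e^2 + (8)*a*e^3 + (-8)*b*d*f^2 + (8)*a*e*f^2) G1 G2 G3); ring.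
  - apply (ideal3 _ _ _ _ _ ((4)*a^2*b*d + (4)*b^3*d + (4)*b*c^2*d + (-4)*b*d^3 + (-4)*a^3*e + (-4)*a*b^2*e + (-4)*a*c^2*e + (4)*a*d^2*e + (-4)*b*d*e^2 + (4)*a*e^3 + (-4)*b*d*f^2 + (4)*a*e*f^2) ((-4)*a^2*b*d + (-4)*b^3*d + (-4)*b*c^2*d + (4)*a^3*e + (4)*a*b^2*e + (4)*a*c^2*e) 0 G1 G2 G3); ring.
Qed.

Lemma w01c v : on_surface v -> cdirac w0 (cconj w1) v = (0, 0).
Proof. intro Hs. destruct (surf_facts v Hs) as (Hx & Hsp & H1 & Hn & Hnn & HN).
  assert (Hp : 0 < Sp v) by lra.
  rewrite (cdirac_HG _ _ v _ _ _ _ (HG_R0 v Hx Hp) (HG_I0 v Hx Hp) (HG_conj_fst _ _ _ (HG_R1 v Hx Hp)) (HG_conj_snd _ _ _ (HG_I1 v Hx Hp))).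
  alg v Hx Hsp H1 Hn Hnn HN Hp.
  - apply (ideal3 _ _ _ _ _ ((8)*r^2*a*b + (8)*a^3*b + (8)*a*b^3 + (8)*a*b*c^2 + (8)*r^2*d*e + (8)*a^2*d*e + (8)*b^2*d*e + (8)*b*c*d*f + (8)*a*c*e*f + (-8)*a*b*f^2) ((-8)*a^3*b + (-8)*a*b^3 + (-8)*a*b*c^2 + (-8)*a*b*d^2 + (-8)*a^2*d*e + (-8)*b^2*d*e + (-8)*a*b*e^2 + (-8)*b*c*d*f + (-8)*a*c*e*f) ((8)*b*d^3 + (8)*a*d^2*e + (8)*b*d*e^2 + (8)*a*e^3 + (8)*b*d*f^2 + (8)*a*e*f^2) G1 G2 G3); ring.
  - apply (ideal3 _ _ _ _ _ ((4)*r^2*a^2 + (4)*a^4 + (-4)*r^2*b^2 + (-4)*b^4 + (4)*a^2*c^2 + (-4)*b^2*c^2 + (4)*r^2*d^2 + (4)*a^2*d^2 + (4)*b^2*d^2 + (-4)*r^2*e^2 + (-4)*a^2*e^2 + (-4)*b^2*e^2 + (8)*a*c*d*f + (-8)*b*c*e*f + (-4)*a^2*f^2 + (4)*b^2*f^2) ((-4)*a^4 + (4)*b^4 + (-4)*a^2*c^2 + (4)*b^2*c^2 + (-8)*a^2*d^2 + (8)*b^2*e^2 + (-8)*a*c*d*f + (8)*b*c*e*f) ((8)*a*d^3 + (-8)*b*d^2*e + (8)*a*d*e^2 + (-8)*b*e^3 + (8)*a*d*f^2 + (-8)*b*e*f^2) G1 G2 G3); ring.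
Qed.

Lemma w00c v : on_surface v -> cdirac w0 (cconj w0) v = (0, - 4 * (NN v + J3 v)).
Proof. intro Hs. destruct (surf_facts v Hs) as (Hx & Hsp & H1 & Hn & Hnn & HN).
  assert (Hp : 0 < Sp v) by lra.
  rewrite (cdirac_HG _ _ v _ _ _ _ (HG_R0 v Hx Hp) (HG_I0 v Hx Hp) (HG_conj_fst _ _ _ (HG_R0 v Hx Hp)) (HG_conj_snd _ _ _ (HG_I0 v Hx Hp))).
  alg v Hx Hsp H1 Hn Hnn HN Hp.
  - apply (ideal3 _ _ _ _ _ 0 0 0 G1 G2 G3); ring.
  - apply (ideal3 _ _ _ _ _ ((4)*r^2*a^2 + (-4)*a^4 + (4)*r^2*b^2 + (-8)*a^2*b^2 + (-4)*b^4 + (8)*r^2*c^2 + (-4)*a^2*c^2 + (-4)*b^2*c^2 + (-8)*r^2*b*d + (-4)*a^2*b*d + (-4)*b^3*d + (-4)*b*c^2*d + (4)*r^2*d^2 + (-4)*a^2*d^2 + (4)*b^2*d^2 + (4)*b*d^3 + (8)*r^2*a*e + (4)*a^3*e + (4)*a*b^2*e + (4)*a*c^2*e + (-16)*a*b*d*e + (-4)*a*d^2*e + (4)*r^2*e^2 + (4)*a^2*e^2 + (-4)*b^2*e^2 + (4)*b*d*e^2 + (-4)*a*e^3 + (-8)*a*c*d*f + (-8)*b*c*e*f + (8)*r^2*f^2 + (4)*a^2*f^2 + (4)*b^2*f^2 + (4)*b*d*f^2 + (-4)*a*e*f^2) ((4)*a^4 + (8)*a^2*b^2 + (4)*b^4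 + (4)*a^2*c^2 + (4)*b^2*c^2 + (4)*a^2*b*d + (4)*b^3*d + (4)*b*c^2*d + (8)*a^2*d^2 + (-4)*a^3*e + (-4)*a*b^2*e + (-4)*a*c^2*e + (16)*a*b*d*e + (8)*b^2*e^2 + (8)*a*c*d*f + (8)*b*c*e*f) ((-8)*a*d^3 + (-8)*b*d^2*e + (-8)*a*d*e^2 + (-8)*b*e^3 + (-8)*a*d*f^2 + (-8)*b*e*f^2) G1 G2 G3); ring.
Qed.

Lemma w11c v : on_surface v -> cdirac w1 (cconj w1) v = (0, - 4 * (NN v - J3 v)).
Proof. intro Hs. destruct (surf_facts v Hs) as (Hx & Hsp & H1 & Hn & Hnn & HN).
  assert (Hp : 0 < Sp v) by lra.
  rewrite (cdirac_HG _ _ v _ _ _ _ (HG_R1 v Hx Hp) (HG_I1 v Hx Hp) (HG_conj_fst _ _ _ (HG_R1 v Hx Hp)) (HG_conj_snd _ _ _ (HG_I1 v Hx Hp))).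
  alg v Hx Hsp H1 Hn Hnn HN Hp.
  - apply (ideal3 _ _ _ _ _ 0 0 0 G1 G2 G3); ring.
  - apply (ideal3 _ _ _ _ _ ((4)*r^2*a^2 + (-4)*a^4 + (4)*r^2*b^2 + (-8)*a^2*b^2 + (-4)*b^4 + (8)*r^2*c^2 + (-4)*a^2*c^2 + (-4)*b^2*c^2 + (8)*r^2*b*d + (4)*a^2*b*d + (4)*b^3*d + (4)*b*c^2*d + (4)*r^2*d^2 + (-4)*a^2*d^2 + (4)*b^2*d^2 + (-4)*b*d^3 + (-8)*r^2*a*e + (-4)*a^3*e + (-4)*a*b^2*e + (-4)*a*c^2*e + (-16)*a*b*d*e + (4)*a*d^2*e + (4)*r^2*e^2 + (4)*a^2*e^2 + (-4)*b^2*e^2 + (-4)*b*d*e^2 + (4)*a*e^3 + (-8)*a*c*d*f + (-8)*b*c*e*f + (8)*r^2*f^2 + (4)*a^2*f^2 + (4)*b^2*f^2 + (-4)*b*d*f^2 + (4)*a*e*f^2) ((4)*a^4 + (8)*a^2*b^2 + (4)*b^4 + (4)*a^2*c^2 + (4)*b^2*c^2 + (-4)*a^2*b*d + (-4)*b^3*d + (-4)*b*c^2*d + (8)*a^2*d^2 + (4)*a^3*e + (4)*a*b^2*e + (4)*a*c^2*e + (16)*a*b*d*e + (8)*b^2*e^2 + (8)*a*c*d*f + (8)*b*c*e*f) ((-8)*a*d^3 + (-8)*b*d^2*e + (-8)*a*d*e^2 + (-8)*b*e^3 + (-8)*a*d*f^2 + (-8)*b*e*f^2) G1 G2 G3); 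ring.
Qed.

Lemma w10c v : on_surface v -> cdirac w1 (cconj w0) v = (0, 0).
Proof. intro Hs. destruct (surf_facts v Hs) as (Hx & Hsp & H1 & Hn & Hnn & HN).
  assert (Hp : 0 < Sp v) by lra.
  rewrite (cdirac_HG _ _ v _ _ _ _ (HG_R1 v Hx Hp) (HG_I1 v Hx Hp) (HG_conj_fst _ _ _ (HG_R0 v Hx Hp)) (HG_conj_snd _ _ _ (HG_I0 v Hx Hp))).
  alg v Hx Hsp H1 Hn Hnn HN Hp.
  - apply (ideal3 _ _ _ _ _ ((-8)*r^2*a*b + (-8)*a^3*b + (-8)*a*b^3 + (-8)*a*b*c^2 + (-8)*r^2*d*e + (-8)*a^2*d*e + (-8)*b^2*d*e + (-8)*b*c*d*f + (-8)*a*c*e*f + (8)*a*b*f^2) ((8)*a^3*b + (8)*a*b^3 + (8)*a*b*c^2 + (8)*a*b*d^2 + (8)*a^2*d*e + (8)*b^2*d*e + (8)*a*b*e^2 + (8)*b*c*d*f + (8)*a*c*e*f) ((-8)*b*d^3 + (-8)*a*d^2*e + (-8)*b*d*e^2 + (-8)*a*e^3 + (-8)*b*d*f^2 + (-8)*a*e*f^2) G1 G2 G3); ring.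
  - apply (ideal3 _ _ _ _ _ ((4)*r^2*a^2 + (4)*a^4 + (-4)*r^2*b^2 + (-4)*b^4 + (4)*a^2*c^2 + (-4)*b^2*c^2 + (4)*r^2*d^2 + (4)*a^2*d^2 + (4)*b^2*d^2 + (-4)*r^2*e^2 + (-4)*a^2*e^2 + (-4)*b^2*e^2 + (8)*a*c*d*f + (-8)*b*c*e*f + (-4)*a^2*f^2 + (4)*b^2*f^2) ((-4)*a^4 + (4)*b^4 + (-4)*a^2*c^2 + (4)*b^2*c^2 + (-8)*a^2*d^2 + (8)*b^2*e^2 + (-8)*a*c*d*f + (8)*b*c*e*f) ((8)*a*d^3 + (-8)*b*d^2*e + (8)*a*d*e^2 + (-8)*b*e^3 + (8)*a*d*f^2 + (-8)*b*e*f^2) G1 G2 G3); ring.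
Qed.



Lemma deriv_local f g x l d : 0 < d -> (forall t, Rabs (t - x) < d -> f t = g t) ->
  derivable_pt_lim g x l -> derivable_pt_lim f x l.
Proof. intros Hd E H eps Heps. destruct (H eps Heps) as [del Hdel].
  assert (Hm : 0 < Rmin del d) by (apply Rmin_pos; [apply cond_pos | auto]).
  exists (mkposreal _ Hm). intros h hn hl. simpl in hl.
  rewrite !E. apply Hdel; auto. apply Rlt_le_trans with (1 := hl), Rmin_l.
  replace (x - x) with 0 by ring. rewrite Rabs_R0; auto.
  replace (x + h - x) with h by ring. apply Rlt_le_trans with (1 := hl), Rmin_r. Qed.

Lemma upd_close v i t d : Rabs (t - v i) < d -> 0 < d ->
  forall j, (j < 6)%nat -> Rabs (upd v i t j - v j) < d.
Proof. intros H Hd j _. unfold upd. destruct (Nat.eqb_spec j i).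
  subst; auto. replace (v j - v j) with 0 by ring. rewrite Rabs_R0; auto. Qed.

Lemma HG_partials f v : has_partials f v -> HG f v (fun i => pd f i v).
Proof. intros H i Hi. destruct (H i Hi) as [l Hl]. rewrite (pd_eq _ _ _ _ Hl). exact Hl. Qed.

Definition sc1 (s1 s2 : R) (f g : nat -> R) := fun i => s1 * f i - s2 * g i.
Definition sc2 (s1 s2 : R) (f g : nat -> R) := fun i => s1 * g i + s2 * f i.

Lemma HG_sq z w v : local_sqrt z w v -> cdiff z v ->
  HG (fun u => fst (w u)) v (sc1 (2 * fst (z v)) (2 * snd (z v))
        (fun i => pd (fun u => fst (z u)) i v) (fun i => pd (fun u => snd (z u)) i v)) /\
  HG (fun u => snd (w u)) v (sc2 (2 * fst (z v)) (2 * snd (z v))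
        (fun i => pd (fun u => fst (z u)) i v) (fun i => pd (fun u => snd (z u)) i v)).
Proof. intros [d [Hd Hl]] [Ha Hb].
  apply HG_partials in Ha. apply HG_partials in Hb.
  split; intros i Hi.
  - eapply deriv_local with (g := fun t => fst (z (upd v i t)) * fst (z (upd v i t)) - snd (z (upd v i t)) * snd (z (upd v i t))); eauto.
    { intros t Ht. rewrite <- (Hl _ (upd_close v i t d Ht Hd)). reflexivity. }
    pose proof (HG_minus _ _ _ _ _ (HG_mult _ _ _ _ _ Ha Ha) (HG_mult _ _ _ _ _ Hb Hb) i Hi) as K.
    unfold sc1. replace (2 * fst (z v) * pd (fun u => fst (z u)) i v - 2 * snd (z v) * pd (fun u => snd (z u)) i v)
      with (pd (fun u => fst (z u)) i v * fst (z v) + fst (z v) * pd (fun u => fst (z u)) i v -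
       (pd (fun u => snd (z u)) i v * snd (z v) + snd (z v) * pd (fun u => snd (z u)) i v)) by ring.
    exact K.
  - eapply deriv_local with (g := fun t => fst (z (upd v i t)) * snd (z (upd v i t)) + snd (z (upd v i t)) * fst (z (upd v i t))); eauto.
    { intros t Ht. rewrite <- (Hl _ (upd_close v i t d Ht Hd)). reflexivity. }
    pose proof (HG_plus _ _ _ _ _ (HG_mult _ _ _ _ _ Ha Hb) (HG_mult _ _ _ _ _ Hb Ha) i Hi) as K.
    unfold sc2. replace (2 * fst (z v) * pd (fun u => snd (z u)) i v + 2 * snd (z v) * pd (fun u => fst (z u)) i v)
      with (pd (fun u => fst (z u)) i v * snd (z v) + fst (z v) * pd (fun u => snd (z u)) i v +
       (pd (fun u => snd (z u)) i v * fst (z v) + snd (z v) * pd (fun u => fst (z u)) i v)) by ring.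
    exact K.
Qed.

Definition CD v f g h k := (Dg v f h - Dg v g k, Dg v f k + Dg v g h).

Lemma CD_scale v s1 s2 t1 t2 f g h k :
  CD v (sc1 s1 s2 f g) (sc2 s1 s2 f g) (sc1 t1 t2 h k) (sc2 t1 t2 h k) =
  cmul (cmul (s1, s2) (t1, t2)) (CD v f g h k).
Proof. unfold CD, Dg. set (c := pbg (gphi1 v) (gphi2 v)). set (P1 := gphi1 v). set (P2 := gphi2 v). unfold pbg, sc1, sc2, cmul; simpl. unfold Rdiv. f_equal; ring. Qed.

Lemma brk z w z' w' v : local_sqrt z w v -> cdiff z v -> local_sqrt z' w' v -> cdiff z' v ->
  cdirac w w' v = cmul (cmul (2 * fst (z v), 2 * snd (z v)) (2 * fst (z' v), 2 * snd (z' v))) (cdirac z z' v) /\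
  cdirac w (cconj w') v = cmul (cmul (2 * fst (z v), 2 * snd (z v)) (2 * fst (z' v), - (2 * snd (z' v)))) (cdirac z (cconj z') v).
Proof. intros L1 D1 L2 D2.
  destruct (HG_sq _ _ _ L1 D1) as [A1 B1]. destruct (HG_sq _ _ _ L2 D2) as [A2 B2].
  destruct D1 as [Da1 Db1]. destruct D2 as [Da2 Db2].
  apply HG_partials in Da1, Db1, Da2, Db2.
  split.
  - rewrite (cdirac_HG _ _ v _ _ _ _ A1 B1 A2 B2), (cdirac_HG _ _ v _ _ _ _ Da1 Db1 Da2 Db2).
    apply (CD_scale v).
  - rewrite (cdirac_HG _ _ v _ _ _ _ A1 B1 (HG_conj_fst _ _ _ A2) (HG_conj_snd _ _ _ B2)).
    rewrite (cdirac_HG _ _ v _ _ _ _ Da1 Db1 (HG_conj_fst _ _ _ Da2) (HG_conj_snd _ _ _ Db2)).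
    unfold Dg. set (c := pbg (gphi1 v) (gphi2 v)). set (P1 := gphi1 v). set (P2 := gphi2 v).
    unfold pbg, sc1, sc2, cmul; simpl. unfold Rdiv. f_equal; ring.
Qed.


Lemma abs_bound q l e : Rabs (q - l) < e -> l - e < q < l + e.
Proof. intro H. apply Rabs_def2 in H. lra. Qed.

Lemma sq_bound q l : l - 1 < q < l + 1 -> q * q <= 2 * l * l + 2.
Proof. intros [A B]. assert ((q - l) * (q - l) < 1).
  { assert (0 < (q - l + 1) * (l + 1 - q)) by (apply Rmult_lt_0_compat; lra).
    replace ((q - l) * (q - l)) with (1 - (q - l + 1) * (l + 1 - q)) by ring. lra. }
  assert (0 <= (q - 2 * l) * (q - 2 * l)) by apply Rle_0_sqr.
  replace (q * q) with (2 * ((q - l) * (q - l)) + 2 * l * l - (q - 2 * l) * (q - 2 * l)) by ring. lra. Qed.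

Lemma degen z w v D : local_sqrt z w v -> cdiff z v -> fst (z v) = 0 -> snd (z v) = 0 ->
  derivable_pt_lim (fun t => fst (w (upd v 0%nat t))) (v 0%nat) D -> D <> 0 -> False.
Proof.
  intros [d [Hd Hl]] [Ha Hb] Z1 Z2 HW HD.
  destruct (Ha 0%nat ltac:(lia)) as [lf Hf]. destruct (Hb 0%nat ltac:(lia)) as [lg Hg].
  assert (He1 : 0 < Rabs D / 2) by (apply Rabs_pos_lt in HD; lra).
  destruct (HW _ He1) as [d1 H1]. destruct (Hf 1 Rlt_0_1) as [d2 H2]. destruct (Hg 1 Rlt_0_1) as [d3 H3].
  set (M := 2 * lf * lf + 2 + 2 * lg * lg + 2).
  assert (HM : 0 < M) by (unfold M; nra).
  assert (HDD : 0 < D * D) by (apply Rsqr_pos_lt in HD; unfold Rsqr in HD; lra).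
  set (k := D * D / (4 * M * M)).
  assert (Hk : 0 < k) by (unfold k; apply Rdiv_lt_0_compat; nra).
  set (m := Rmin (Rmin (Rmin d1 d2) (Rmin d3 d)) (Rmin 1 k)).
  assert (Hm : 0 < m).
  { unfold m. repeat apply Rmin_pos; auto; try apply cond_pos; lra. }
  set (h := m / 2).
  assert (hpos : 0 < h) by (unfold h; lra).
  assert (hm : h < m) by (unfold h; lra).
  assert (m1 : m <= d1) by (unfold m; eapply Rle_trans; [apply Rmin_l|]; eapply Rle_trans; [apply Rmin_l|]; apply Rmin_l).
  assert (m2 : m <= d2) by (unfold m; eapply Rle_trans; [apply Rmin_l|]; eapply Rle_trans; [apply Rmin_l|]; apply Rmin_r).
  assert (m3 : m <= d3) by (unfold m; eapply Rle_trans; [apply Rmin_l|]; eapply Rle_trans; [apply Rmin_r|]; apply Rmin_l).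
  assert (m4 : m <= d) by (unfold m; eapply Rle_trans; [apply Rmin_l|]; eapply Rle_trans; [apply Rmin_r|]; apply Rmin_r).
  assert (m5 : m <= 1) by (unfold m; eapply Rle_trans; [apply Rmin_r|]; apply Rmin_l).
  assert (m6 : m <= k) by (unfold m; eapply Rle_trans; [apply Rmin_r|]; apply Rmin_r).
  assert (habs : Rabs h = h) by (apply Rabs_pos_eq; lra).
  assert (hn : h <> 0) by lra.
  specialize (H1 h hn ltac:(rewrite habs; lra)).
  specialize (H2 h hn ltac:(rewrite habs; lra)).
  specialize (H3 h hn ltac:(rewrite habs; lra)).
  rewrite upd_same in H1, H2, H3.
  assert (Wv : fst (w v) = 0).
  { rewrite <- (Hl v). simpl. rewrite Z1, Z2. ring.
    intros j _. replace (v j - v j) with 0 by ring. rewrite Rabs_R0; auto. }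
  assert (Wh : fst (w (upd v 0%nat (v 0%nat + h))) =
     fst (z (upd v 0%nat (v 0%nat + h))) * fst (z (upd v 0%nat (v 0%nat + h))) -
     snd (z (upd v 0%nat (v 0%nat + h))) * snd (z (upd v 0%nat (v 0%nat + h)))).
  { rewrite <- (Hl _ (upd_close v 0%nat _ d ltac:(replace (v 0%nat + h - v 0%nat) with h by ring; rewrite habs; lra) Hd)). reflexivity. }
  rewrite Wv, Wh in H1. rewrite Z1 in H2. rewrite Z2 in H3.
  set (a := fst (z (upd v 0%nat (v 0%nat + h)))) in *.
  set (b := snd (z (upd v 0%nat (v 0%nat + h)))) in *.
  apply abs_bound in H2. apply abs_bound in H3.
  set (qa := (a - 0) / h) in *. set (qb := (b - 0) / h) in *.
  assert (Ea : a = qa * h) by (unfold qa; field; lra).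
  assert (Eb : b = qb * h) by (unfold qb; field; lra).
  assert (Qa : qa * qa <= 2 * lf * lf + 2) by (apply sq_bound; lra).
  assert (Qb : qb * qb <= 2 * lg * lg + 2) by (apply sq_bound; lra).
  assert (Eq : (a * a - b * b - 0) / h = (qa * qa - qb * qb) * h) by (rewrite Ea, Eb; field; lra).
  rewrite Eq in H1. set (qw := (qa * qa - qb * qb) * h) in *.
  assert (Qw : qw * qw <= M * M * (h * h)).
  { unfold qw, M. assert (0 <= qa * qa) by nra. assert (0 <= qb * qb) by nra.
    assert ((qa * qa - qb * qb) * (qa * qa - qb * qb) <= (qa * qa + qb * qb) * (qa * qa + qb * qb)) by nra.
    assert ((qa * qa + qb * qb) * (qa * qa + qb * qb) <= (2 * lf * lf + 2 + 2 * lg * lg + 2) * (2 * lf * lf + 2 + 2 * lg * lg + 2)) by nra.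
    nra. }
  assert (Hq : D * D / 4 < qw * qw).
  { apply abs_bound in H1. destruct (Rle_or_lt 0 D) as [HDp|HDn].
    - rewrite Rabs_pos_eq in H1 by lra. nra.
    - rewrite Rabs_left in H1 by lra. nra. }
  assert (hh : h * h < k) by nra.
  assert (M * M * k = D * D / 4) by (unfold k; field; lra).
  nra.
Qed.


Lemma sqrt_eq X Y : 0 <= Y -> Y * Y = X -> sqrt X = Y.
Proof. intros H <-. apply sqrt_square, H. Qed.

Ltac prep2 v Hs :=
  let Hx := fresh "Hx" in let Hsp := fresh "Hsp" in let H1 := fresh "H1" in
  let Hn := fresh "Hn" in let Hnn := fresh "Hnn" in let HN := fresh "HN" in
  destruct (surf_facts v Hs) as (Hx & Hsp & H1 & Hn & Hnn & HN);
  unfold cnorm, w0, w1, copp, cadd, cmul, Kminus, Lminus, Kplus, Lplus, ci, K1, K2, L1, L2; simpl;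
  rewrite ?HN, ?Hn; unfold Sx, Sp, J3, phi1 in *;
  let H := fresh in assert (H : normx v <> 0) by (let h := fresh in intro h; rewrite h in Hnn; lra);
  set (r := normx v) in *; set (a := x1 v) in *; set (b := x2 v) in *; set (c := x3 v) in *;
  set (d := p1 v) in *; set (e := p2 v) in *; set (f := p3 v) in *;
  assert (G1 : r ^ 2 - (a ^ 2 + b ^ 2 + c ^ 2) = 0) by (rewrite <- Hnn; ring);
  assert (G2 : d ^ 2 + e ^ 2 + f ^ 2 - (a ^ 2 + b ^ 2 + c ^ 2) = 0) by lra;
  assert (G3 : a * d + b * e + c * f = 0) by lra.

Lemma lag v : on_surface v -> (x1 v ^ 2 + x2 v ^ 2 + x3 v ^ 2) ^ 2 =
   (x2 v * p3 v - x3 v * p2 v) ^ 2 + (x3 v * p1 v - x1 v * p3 v) ^ 2 + (x1 v * p2 v - x2 v * p1 v) ^ 2.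
Proof. intro Hs. prep2 v Hs.
  apply (ideal3 _ _ _ _ _ 0 ((-1)*a^2 + (-1)*b^2 + (-1)*c^2) ((1)*a*d + (1)*b*e + (1)*c*f) G1 G2 G3); ring.
Qed.

Lemma J3_bound v : on_surface v -> - (x1 v ^ 2 + x2 v ^ 2 + x3 v ^ 2) <= J3 v <= x1 v ^ 2 + x2 v ^ 2 + x3 v ^ 2.
Proof. intro Hs. pose proof (lag v Hs) as L. unfold J3.
  set (S := x1 v ^ 2 + x2 v ^ 2 + x3 v ^ 2) in *. set (j := x1 v * p2 v - x2 v * p1 v) in *.
  assert (0 <= S) by (unfold S; nra).
  assert (E : S * S - j * j = (x2 v * p3 v - x3 v * p2 v) ^ 2 + (x3 v * p1 v - x1 v * p3 v) ^ 2)
    by (replace (S * S) with (S ^ 2) by ring; rewrite L; ring).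
  assert (0 <= (x2 v * p3 v - x3 v * p2 v) ^ 2) by apply pow2_ge_0.
  assert (0 <= (x3 v * p1 v - x1 v * p3 v) ^ 2) by apply pow2_ge_0.
  assert (j * j <= S * S) by lra. split.
  - destruct (Rle_or_lt (- S) j); auto. nra.
  - destruct (Rle_or_lt j S); auto. nra. Qed.

Lemma cnorm_w0 v : on_surface v -> cnorm (w0 v) = NN v + J3 v.
Proof. intro Hs. pose proof (J3_bound v Hs) as JB. prep2 v Hs. apply sqrt_eq. lra.
  apply (ideal3 _ _ _ _ _ ((-1)*a^2 + (-1)*b^2 + (2)*b*d + (-1)*d^2 + (-2)*a*e + (-1)*e^2) ((-1)*c^2) ((-1)*a*d + (-1)*b*e + (1)*c*f) G1 G2 G3); ring.
Qed.

Lemma cnorm_w1 v : on_surface v -> cnorm (w1 v) = NN v - J3 v.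
Proof. intro Hs. pose proof (J3_bound v Hs) as JB. prep2 v Hs. apply sqrt_eq. lra.
  apply (ideal3 _ _ _ _ _ ((-1)*a^2 + (-1)*b^2 + (-2)*b*d + (-1)*d^2 + (2)*a*e + (-1)*e^2) ((-1)*c^2) ((-1)*a*d + (-1)*b*e + (1)*c*f) G1 G2 G3); ring.
Qed.


Lemma cmul_cancel s P Q : fst s * fst s + snd s * snd s <> 0 -> cmul s P = cmul s Q -> P = Q.
Proof. destruct s as [s1 s2], P as [p q], Q as [p' q']. unfold cmul; simpl. intros Hs E.
  injection E as E1 E2.
  assert (A1 : (s1 * s1 + s2 * s2) * (p - p') = 0).
  { replace ((s1 * s1 + s2 * s2) * (p - p')) with (s1 * (s1 * p - s2 * q - (s1 * p' - s2 * q')) + s2 * (s1 * q + s2 * p - (s1 * q' + s2 * p'))) by ring. rewrite E1, E2. ring. }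
  assert (A2 : (s1 * s1 + s2 * s2) * (q - q') = 0).
  { replace ((s1 * s1 + s2 * s2) * (q - q')) with (s1 * (s1 * q + s2 * p - (s1 * q' + s2 * p')) - s2 * (s1 * p - s2 * q - (s1 * p' - s2 * q'))) by ring. rewrite E1, E2. ring. }
  apply Rmult_integral in A1, A2. f_equal; lra. Qed.

Lemma cnorm_sq z w : cmul z z = w -> cnorm z ^ 2 = cnorm w /\ cnorm z ^ 2 = fst z * fst z + snd z * snd z.
Proof. intros <-. destruct z as [a b]. unfold cnorm, cmul; cbn [fst snd].
  rewrite pow2_sqrt by nra. split; [|ring].
  symmetry. apply sqrt_eq. nra. ring. Qed.

Lemma dirac_anti f g v : dirac f g v = - dirac g f v.
Proof. unfold dirac. set (c := pb phi1 phi2 v). unfold pb. unfold Rdiv. ring. Qed.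

Lemma cdirac_self F v : cdirac F F v = (0, 0).
Proof. unfold cdirac. cbv zeta.
  rewrite (dirac_anti (fun u => snd (F u)) (fun u => fst (F u))).
  assert (forall g, dirac g g v = 0) as Z by (intro g; pose proof (dirac_anti g g v); lra).
  rewrite !Z. f_equal; ring. Qed.

Theorem mainTheorem7 :
  forall v : V, on_surface v ->
    cnorm (w0 v) = NN v + J3 v /\
    cnorm (w1 v) = NN v - J3 v /\
    cdirac w0 w1 v = (0, 0) /\
    cdirac w0 (cconj w1) v = (0, 0) /\
    cdirac w0 (cconj w0) v = (0, - 4 * (NN v + J3 v)) /\
    cdirac w1 (cconj w1) v = (0, - 4 * (NN v - J3 v)) /\
    (forall z0 z1 : V -> Cx,
       local_sqrt z0 w0 v -> local_sqrt z1 w1 v ->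
       cdiff z0 v -> cdiff z1 v ->
       / 2 * (cnorm (z0 v) ^ 2 + cnorm (z1 v) ^ 2) = NN v /\
       / 2 * (cnorm (z0 v) ^ 2 - cnorm (z1 v) ^ 2) = J3 v /\
       cdirac z0 (cconj z0) v = (0, -1) /\
       cdirac z1 (cconj z1) v = (0, -1) /\
       cdirac z0 (cconj z1) v = (0, 0) /\
       cdirac z1 (cconj z0) v = (0, 0) /\
       cdirac z0 z1 v = (0, 0) /\
       cdirac z0 z0 v = (0, 0) /\
       cdirac z1 z1 v = (0, 0)).
Proof.
  intros v Hs.
  pose proof (cnorm_w0 v Hs) as N0. pose proof (cnorm_w1 v Hs) as N1.
  pose proof (w01 v Hs) as B01. pose proof (w01c v Hs) as B01c.
  pose proof (w00c v Hs) as B00c. pose proof (w11c v Hs) as B11c. pose proof (w10c v Hs) as B10c.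
  do 6 (split; [assumption|]).
  intros z0 z1 L0 L1 D0 D1.
  destruct L0 as [d0 [Hd0 E0]] eqn:EL0. destruct L1 as [d1 [Hd1 E1]] eqn:EL1.
  assert (Z0 : cmul (z0 v) (z0 v) = w0 v) by (apply E0; intros; replace (v j - v j) with 0 by ring; rewrite Rabs_R0; auto).
  assert (Z1 : cmul (z1 v) (z1 v) = w1 v) by (apply E1; intros; replace (v j - v j) with 0 by ring; rewrite Rabs_R0; auto).
  clear EL0 EL1.
  destruct (cnorm_sq _ _ Z0) as [S0 T0]. destruct (cnorm_sq _ _ Z1) as [S1 T1].
  rewrite S0, S1, N0, N1. split; [field|]. split; [field|].
  rewrite N0 in S0. rewrite N1 in S1.
  set (a0 := fst (z0 v)) in *. set (b0 := snd (z0 v)) in *.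
  set (a1 := fst (z1 v)) in *. set (b1 := snd (z1 v)) in *.
  assert (n0 : a0 * a0 + b0 * b0 = NN v + J3 v) by lra.
  assert (n1 : a1 * a1 + b1 * b1 = NN v - J3 v) by lra.
  destruct (surf_facts v Hs) as (Hx & Hsp & H1 & Hn & Hnn & HN).
  assert (Hp : 0 < Sp v) by lra.
  assert (nxpos : 0 < normx v) by (unfold normx; apply sqrt_lt_R0; exact Hx).
  assert (P0 : 0 < a0 * a0 + b0 * b0).
  { destruct (Rle_lt_or_eq_dec 0 (a0 * a0 + b0 * b0)) as [h|h]; [nra|auto|].
    exfalso. apply (degen z0 w0 v (gR0 v 0%nat)).
    - exists d0; auto.
    - exact D0.
    - apply (Rplus_sqr_eq_0 a0 b0); unfold Rsqr; lra.
    - apply (Rplus_sqr_eq_0 a0 b0); unfold Rsqr; lra.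
    - apply (HG_R0 v Hx Hp 0%nat); lia.
    - unfold gR0. cbv zeta. assert (0 <= x1 v * x1 v / normx v).
      { unfold Rdiv; apply Rmult_le_pos; [nra | apply Rlt_le, Rinv_0_lt_compat; lra]. } lra. }
  assert (P1 : 0 < a1 * a1 + b1 * b1).
  { destruct (Rle_lt_or_eq_dec 0 (a1 * a1 + b1 * b1)) as [h|h]; [nra|auto|].
    exfalso. apply (degen z1 w1 v (gR1 v 0%nat)).
    - exists d1; auto.
    - exact D1.
    - apply (Rplus_sqr_eq_0 a1 b1); unfold Rsqr; lra.
    - apply (Rplus_sqr_eq_0 a1 b1); unfold Rsqr; lra.
    - apply (HG_R1 v Hx Hp 0%nat); lia.
    - unfold gR1. cbv zeta. assert (0 <= x1 v * x1 v / normx v).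
      { unfold Rdiv; apply Rmult_le_pos; [nra | apply Rlt_le, Rinv_0_lt_compat; lra]. } lra. }
  assert (LL0 : local_sqrt z0 w0 v) by (exists d0; auto).
  assert (LL1 : local_sqrt z1 w1 v) by (exists d1; auto).
  destruct (brk _ _ _ _ v LL0 D0 LL0 D0) as [_ K00].
  destruct (brk _ _ _ _ v LL1 D1 LL1 D1) as [_ K11].
  destruct (brk _ _ _ _ v LL0 D0 LL1 D1) as [K01 K01c].
  destruct (brk _ _ _ _ v LL1 D1 LL0 D0) as [_ K10c].
  fold a0 b0 a1 b1 in K00, K11, K01, K01c, K10c.
  assert (nz : forall s1 s2 t1 t2, 0 < s1 * s1 + s2 * s2 -> 0 < t1 * t1 + t2 * t2 ->
     fst (cmul (2 * s1, 2 * s2) (2 * t1, t2)) * fst (cmul (2 * s1, 2 * s2) (2 * t1, t2)) +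
     snd (cmul (2 * s1, 2 * s2) (2 * t1, t2)) * snd (cmul (2 * s1, 2 * s2) (2 * t1, t2)) <> 0).
  { intros. unfold cmul; simpl. apply Rgt_not_eq.
    replace ((2 * s1 * (2 * t1) - 2 * s2 * t2) * (2 * s1 * (2 * t1) - 2 * s2 * t2) +
      (2 * s1 * t2 + 2 * s2 * (2 * t1)) * (2 * s1 * t2 + 2 * s2 * (2 * t1)))
      with (4 * (s1 * s1 + s2 * s2) * (4 * t1 * t1 + t2 * t2)) by ring.
    apply Rmult_lt_0_compat; nra. }
  split; [|split; [|split; [|split; [|split; [|split]]]]].
  - apply (cmul_cancel _ _ _ (nz a0 b0 a0 (- (2 * b0)) P0 ltac:(nra))).
    rewrite <- K00, B00c. unfold cmul; simpl. f_equal; nra.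
  - apply (cmul_cancel _ _ _ (nz a1 b1 a1 (- (2 * b1)) P1 ltac:(nra))).
    rewrite <- K11, B11c. unfold cmul; simpl. f_equal; nra.
  - apply (cmul_cancel _ _ _ (nz a0 b0 a1 (- (2 * b1)) P0 ltac:(nra))).
    rewrite <- K01c, B01c. unfold cmul; simpl. f_equal; ring.
  - apply (cmul_cancel _ _ _ (nz a1 b1 a0 (- (2 * b0)) P1 ltac:(nra))).
    rewrite <- K10c, B10c. unfold cmul; simpl. f_equal; ring.
  - apply (cmul_cancel _ _ _ (nz a0 b0 a1 (2 * b1) P0 ltac:(nra))).
    rewrite <- K01, B01. unfold cmul; simpl. f_equal; ring.
  - apply cdirac_self.
  - apply cdirac_self.
Qed.
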